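(* Let $p\in[0,1]^n$ and $k\in\mathbb N$, and let $\bar X_1,\dots,\bar X_k\in\{0,1\}^n$ be independent random vectors, each having independent entries with $\Pr((\bar X_l)_i=1)=p_i$. Let $f$ be the objective function of the binary integer program below and $x^*\in\{0,1\}^n$ an optimizer of it, fix $\delta>0$, let $\mu:=\mathbb E_{x\sim p}[\|x-x^*\|_1]$ (where $x\sim p$ means $x$ has independent Bernoulli$(p_i)$ entries), and let $L_f$ be the Lipschitz constant of $f$ with respect to the $1$-norm. If $\mu\le\delta/L_f$, then \[\psi(p,k):=\Pr\big(\exists\,l\in[k]:\ f(\bar X_l)\le f(x^* )+\delta\big)\ge1-\exp\!\left(k\left(\frac{\delta}{L_f}\Big(1-\log\frac{\delta}{\mu L_f}\Big)-\mu\right)\right).\]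
   Context: The binary integer program is $\min_{x\in\{0,1\}^n} f(x):=\langle x,Qx\rangle+\langle c,x\rangle$ subject to $Ax\ge b$ and $Bx=d$, with $Q\in\mathbb R^{n\times n}$, $c\in\mathbb R^n$, $A\in\mathbb R^{m_1\times n}$, $b\in\mathbb R^{m_1}$, $B\in\mathbb R^{m_2\times n}$, $d\in\mathbb R^{m_2}$. $[k]=\{1,\dots,k\}$. *)

(* Defs.v *)
From HB Require Import structures.
From mathcomp Require Import all_boot all_order all_algebra.
From mathcomp Require Import reals sequences exp.
Set Implicit Arguments. Unset Strict Implicit. Unset Printing Implicit Defensive.
Import Order.TTheory GRing.Theory Num.Theory.
Local Open Scope ring_scope.

Section Defs.
Variable R : realType.

Definition bvec (n : nat) := {ffun 'I_n -> bool}.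

Definition rvec n (x : bvec n) : 'cV[R]_n := \col_i ((x i)%:R).

Definition objf n (Q : 'M[R]_n) (c : 'cV[R]_n) (x : 'cV[R]_n) : R :=
  (x^T *m (Q *m x)) 0 0 + (c^T *m x) 0 0.

Definition feasible n m1 m2 (A : 'M[R]_(m1, n)) (b : 'cV[R]_m1)
  (B : 'M[R]_(m2, n)) (d : 'cV[R]_m2) (x : 'cV[R]_n) : Prop :=
  (forall i, b i 0 <= (A *m x) i 0) /\ B *m x = d.

Definition is_optimizer n m1 m2 (Q : 'M[R]_n) (c : 'cV[R]_n)
  (A : 'M[R]_(m1, n)) (b : 'cV[R]_m1) (B : 'M[R]_(m2, n)) (d : 'cV[R]_m2)
  (xs : bvec n) : Prop :=
  feasible A b B d (rvec xs) /\
  forall x : bvec n, feasible A b B d (rvec x) -> objf Q c (rvec xs) <= objf Q c (rvec x).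

Definition dist1 n (x y : bvec n) : R := \sum_i `|((x i)%:R - (y i)%:R : R)|.

Definition bern n (p : 'I_n -> R) (x : bvec n) : R :=
  \prod_i (if x i then p i else 1 - p i).

Definition mu_of n (p : 'I_n -> R) (xs : bvec n) : R :=
  \sum_(x : bvec n) bern p x * dist1 x xs.

Definition joint n k (p : 'I_n -> R) (X : {ffun 'I_k -> bvec n}) : R :=
  \prod_l bern p (X l).

Definition psi n k (Q : 'M[R]_n) (c : 'cV[R]_n) (p : 'I_n -> R) (xs : bvec n)
  (delta : R) : R :=
  \sum_(X : {ffun 'I_k -> bvec n} |
          [exists l, objf Q c (rvec (X l)) <= objf Q c (rvec xs) + delta])
     joint p X.

Definition lipschitz1 n (Q : 'M[R]_n) (c : 'cV[R]_n) (L : R) : Prop :=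
  forall x y : bvec n, `|objf Q c (rvec x) - objf Q c (rvec y)| <= L * dist1 x y.

End Defs.

(* Main.v *)
Require Import Defs.
From HB Require Import structures.
From mathcomp Require Import all_boot all_order all_algebra.
From mathcomp Require Import reals sequences exp.
From mathcomp Require Import ring lra.
Import Order.TTheory GRing.Theory Num.Theory.
Set Implicit Arguments. Unset Strict Implicit.
Local Open Scope ring_scope.

Section H.
Variable R : realType.

Lemma sum_prod_ffun (I J : finType) (g : I -> J -> R) :
  \sum_(x : {ffun I -> J}) \prod_i g i (x i) = \prod_i \sum_j g i j.
Proof. by rewrite bigA_distr_bigA. Qed.

Lemma sum_prod_bvec n (g : 'I_n -> bool -> R) :
  \sum_(x : bvec n) \prod_i g i (x i) = \prod_i (g i true + g i false).
Proof. rewrite /bvec sum_prod_ffun; apply: eq_bigr => i _; by rewrite big_bool. Qed.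

Definition w n (p : 'I_n -> R) i (b : bool) : R := if b then p i else 1 - p i.

Lemma bernE n (p : 'I_n -> R) x : bern p x = \prod_i w p i (x i).
Proof. by []. Qed.

Lemma bern_sum n (p : 'I_n -> R) : \sum_(x : bvec n) bern p x = 1.
Proof.
rewrite (eq_bigr (fun x : bvec n => \prod_i w p i (x i))) // sum_prod_bvec.
by apply: big1 => i _; rewrite /w addrC subrK.
Qed.

Lemma bern_ge0 n (p : 'I_n -> R) x : (forall i, 0 <= p i <= 1) -> 0 <= bern p x.
Proof.
move=> hp; apply: prodr_ge0 => i _; case: (x i); have /andP[] := hp i => // _.
by rewrite subr_ge0.
Qed.

Definition r n (p : 'I_n -> R) (xs : bvec n) i : R := if xs i then 1 - p i else p i.

Lemma absb (a b : bool) : `|(a%:R - b%:R : R)| = (a != b)%:R.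
Proof. by case: a; case: b; rewrite /= ?subrr ?normr0 ?subr0 ?normr1 ?sub0r ?normrN ?normr1. Qed.


End H.
Lemma muE (R : realType) n (p : 'I_n -> R) xs : mu_of p xs = \sum_i r p xs i.
Proof.
rewrite /mu_of.
under eq_bigr => x _ do rewrite /dist1 big_distrr /=.
rewrite exchange_big /=; apply: eq_bigr => i _.
rewrite (eq_bigr (fun x : bvec n => \prod_j (w p j (x j) * (if j == i then (x j != xs j)%:R else 1)))); last first.
  move=> x _; rewrite big_split /= -bernE absb; congr (_ * _).
  rewrite (bigD1 i) //= eqxx big1 ?mulr1 // => j /negbTE -> //.
rewrite (sum_prod_bvec (fun j b => w p j b * (if j == i then (b != xs j)%:R else 1))) (bigD1 i) //= eqxx big1 ?mulr1; last first.
  by move=> j /negbTE ->; rewrite !mulr1 /w addrC subrK.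
by rewrite /r /w; case: (xs i) => /=; rewrite ?mulr0 ?mulr1 ?add0r ?addr0.
Qed.

Lemma psi_gen (R : realType) n k (p : 'I_n -> R) (P : pred (bvec n)) :
  (forall i, 0 <= p i <= 1) ->
  \sum_(X : {ffun 'I_k -> bvec n} | [exists l, P (X l)]) joint p X
  = 1 - (\sum_(x : bvec n | ~~ P x) bern p x)^+k.
Proof.
move=> hp.
have tot : \sum_(X : {ffun 'I_k -> bvec n}) joint p X = 1.
  rewrite /joint -(bigA_distr_bigA (fun (l : 'I_k) (x : bvec n) => bern p x)) /=.
  by rewrite big1 // => l _; rewrite bern_sum.
have cmp : \sum_(X : {ffun 'I_k -> bvec n} | ~~ [exists l, P (X l)]) joint p X
   = (\sum_(x : bvec n | ~~ P x) bern p x)^+k.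
  set q := (\sum_(x : bvec n | ~~ P x) bern p x).
  have -> : q ^+ k = \prod_(l < k) q by rewrite prodr_const card_ord.
  rewrite /q.
  rewrite [RHS](eq_bigr (fun l => \sum_(x : bvec n) (if ~~ P x then bern p x else 0))); last by move=> l _; rewrite big_mkcond.
  rewrite (bigA_distr_bigA (fun (l : 'I_k) (x : bvec n) => if ~~ P x then bern p x else 0)) /=.
  rewrite big_mkcond /=; apply: eq_bigr => X _.
  case: ifP => [/existsPn H|/negbFE/existsP [l Hl]].
    by apply: eq_bigr => l _; rewrite H.
  by rewrite (bigD1 l) //= Hl mul0r.
by rewrite -tot [X in _ = X - _](bigID (fun X : {ffun 'I_k -> bvec n} => [exists l, P (X l)])) /= cmp addrK.
Qed.

Lemma chernoff (R : realType) n (p : 'I_n -> R) xs s :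
  (forall i, 0 <= p i <= 1) ->
  \sum_(x : bvec n) bern p x * expR (s * @dist1 R n x xs) <= expR (mu_of p xs * (expR s - 1)).
Proof.
move=> hp.
rewrite (eq_bigr (fun x : bvec n => \prod_i (w p i (x i) * expR (s * (x i != xs i)%:R)))); last first.
  move=> x _; rewrite /dist1 mulr_sumr expR_sum bernE -big_split /=.
  by apply: eq_bigr => i _; rewrite absb.
rewrite (sum_prod_bvec (fun i b => w p i b * expR (s * (b != xs i)%:R))).
rewrite muE mulr_suml expR_sum; apply: ler_prod => i _.
have /andP[p0 p1] := hp i.
rewrite /w /r; case: (xs i) => /=; rewrite mulr0 mulr1 expR0.
  all: apply/andP; split; first by rewrite addr_ge0 ?mulr_ge0 ?expR_ge0 ?subr_ge0.
  all: apply: le_trans (expR_ge1Dx _); rewrite le_eqVlt; apply/orP; left; apply/eqP; ring.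
Qed.

Theorem mainTheorem6 (R : realType) (n m1 m2 k : nat)
  (Q : 'M[R]_n) (c : 'cV[R]_n)
  (A : 'M[R]_(m1, n)) (b : 'cV[R]_m1) (B : 'M[R]_(m2, n)) (d : 'cV[R]_m2)
  (p : 'I_n -> R) (xs : bvec n) (delta L : R) :
  (forall i, 0 <= p i <= 1) ->
  is_optimizer Q c A b B d xs ->
  0 < delta ->
  0 < L -> lipschitz1 Q c L ->
  mu_of p xs <= delta / L ->
  psi k Q c p xs delta >=
    1 - expR (k%:R * (delta / L * (1 - ln (delta / (mu_of p xs * L))) - mu_of p xs)).
Proof.
move=> hp _ hd hL hlip hmu.
rewrite /psi (psi_gen k (fun x : bvec n => objf Q c (@rvec R _ x) <= objf Q c (@rvec R _ xs) + delta)) //.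
set q := \sum_(x : bvec n | _) _.
set mu := mu_of p xs.
set t := delta / L.
rewrite lerD2l lerN2 expRM_natl.
have q0 : 0 <= q by apply: sumr_ge0 => x _; exact: bern_ge0.
have q1 : q <= 1.
  rewrite -(bern_sum p) [X in _ <= X](bigID (fun x : bvec n => ~~ (objf Q c (@rvec R _ x) <= objf Q c (@rvec R _ xs) + delta))) /=.
  by rewrite lerDl; apply: sumr_ge0 => x _; exact: bern_ge0.
have mu0 : 0 <= mu.
  rewrite /mu muE; apply: sumr_ge0 => i _; rewrite /r; have /andP[] := hp i.
  by case: (xs i) => // _; rewrite subr_ge0.
have t0 : 0 < t by rewrite divr_gt0.
suff : q <= expR (t * (1 - ln (delta / (mu * L))) - mu).
  by move=> H; apply: lerXn2r => //; rewrite ?nnegrE ?expR_ge0.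
have [mu_eq0|mupos] := eqVneq mu 0.
  rewrite mu_eq0 mul0r invr0 mulr0 ln0 // !subr0 mulr1.
  by apply: le_trans q1 _; apply: le_trans (expR_ge1Dx _); rewrite lerDl ltW.
have mupos' : 0 < mu by rewrite lt_neqAle eq_sym mupos mu0.
set s := ln (t / mu).
have tmu1 : 1 <= t / mu by rewrite ler_pdivlMr // mul1r.
have s0 : 0 <= s by apply: ln_ge0.
have step1 : q <= \sum_(x : bvec n) bern p x * expR (s * (@dist1 R n x xs - t)).
  rewrite /q big_mkcond /=; apply: ler_sum => x _.
  case: ifP => [H|_]; last by apply: mulr_ge0; [exact: bern_ge0 | exact: expR_ge0].
  apply: ler_peMr; first exact: bern_ge0.
  apply: le_trans (expR_ge1Dx _); rewrite lerDl; apply: mulr_ge0 => //.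
  rewrite subr_ge0.
  have hl := hlip x xs; rewrite -ltNge in H.
  rewrite /t ler_pdivrMr // mulrC; apply: ltW.
  apply: (lt_le_trans _ (le_trans (ler_norm _) hl)).
  by move: H; lra.
apply: le_trans step1 _.
have step2 : \sum_(x : bvec n) bern p x * expR (s * (@dist1 R n x xs - t))
   = (\sum_(x : bvec n) bern p x * expR (s * @dist1 R n x xs)) * expR (- (s * t)).
  rewrite mulr_suml; apply: eq_bigr => x _.
  by rewrite mulrBr expRD -mulNr mulrA mulNr.
rewrite step2.
apply: le_trans (ler_wpM2r (expR_ge0 _) (chernoff xs s hp)) _.
rewrite -expRD /s lnK; last by rewrite posrE divr_gt0.
have -> : delta / (mu * L) = t / mu.
  by rewrite /t; field; apply/andP; split; rewrite ?mupos // gt_eqF.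
rewrite le_eqVlt; apply/orP; left; apply/eqP; congr expR.
rewrite /mu; field. by [].
Qed.
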